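(* Let $X$ be a real reflexive Banach space, let $h\in\mathcal{H}$ and $(x,x^{\ast})\in X\times X^{\ast}$. If $\max\{(\mathcal{A}h)(x,x^{\ast}),((\mathcal{A}h)^{\ast}\circ i)(x,x^{\ast})\}=+\infty$, then $(\mathcal{A}^{\infty}h)(x,x^{\ast})=+\infty$. If $\max\{(\mathcal{A}h)(x,x^{\ast}),((\mathcal{A}h)^{\ast}\circ i)(x,x^{\ast})\}<+\infty$, $\epsilon>0$, and $n$ is an integer with $n>1+\log_2\big((\mathcal{A}h)(x,x^{\ast})-((\mathcal{A}h)^{\ast}\circ i)(x,x^{\ast})\big)-\log_2\epsilon$, then $(\mathcal{A}^n h)(x,x^{\ast})-\epsilon\le(\mathcal{A}^{\infty}h)(x,x^{\ast})$.
   Context: $X^{\ast}$ is the dual of $X$ with pairing $\langle\cdot,\cdot\rangle$. The dual of $X\times X^{\ast}$ is identified with $X^{\ast}\times X$ via $\langle (x,x^{\ast}),(y^{\ast},y)\rangle=\langle x,y^{\ast}\rangle+\langle y,x^{\ast}\rangle$; for $g:X\times X^{\ast}\to\mathbb{R}\cup\{+\infty\}$, $g^{\ast}(y^{\ast},y)=\sup_{(z,z^{\ast})}\{\langle z,y^{\ast}\rangle+\langle y,z^{\ast}\rangle-g(z,z^{\ast})\}$, and $i(z,z^{\ast})=(z^{\ast},z)$. For a maximally monotone $T:X\rightrightarrows X^{\ast}$, $\mathcal{H}(T)$ is the family of lower semicontinuous convex functions $h:X\times X^{\ast}\to\mathbb{R}\cup\{+\infty\}$ with $h(z,z^{\ast})\ge\langle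 z,z^{\ast}\rangle$ everywhere and $h(z,z^{\ast})=\langle z,z^{\ast}\rangle$ whenever $z^{\ast}\in T(z)$; $\mathcal{H}$ is the union of $\mathcal{H}(T)$ over all maximally monotone $T$. $\mathcal{A}h:=\tfrac12(h+h^{\ast}\circ i)$, $\mathcal{A}^n$ is its $n$-th iterate, and $\mathcal{A}^{\infty}h$ is the pointwise limit (equivalently infimum) of the pointwise non-increasing sequence $\{\mathcal{A}^n h\}_{n\ge1}$. The convention $\log_2 0=-\infty$ applies. *)

(* Defs.v *)
From HB Require Import structures.
From mathcomp Require Import all_boot all_order all_algebra.
From mathcomp Require Import all_classical all_reals all_analysis.
Set Implicit Arguments. Unset Strict Implicit. Unset Printing Implicit Defensive.
Import Order.TTheory GRing.Theory Num.Theory.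
Import numFieldNormedType.Exports.
Local Open Scope classical_set_scope.
Local Open Scope ring_scope.

(* Real Banach space X over a realType R.  Elements of the dual X^* are
   represented as functions X -> R satisfying [is_dual]; the pairing
   <x, x^*> is application x^* x. *)
Section Defs.
Context {R : realType} {X : normedModType R}.

Definition is_dual (f : X -> R) : Prop :=
  (forall (a : R) (x y : X), f (a *: x + y) = a * f x + f y) /\ continuous f.

Definition dnorm (f : X -> R) : R :=
  sup [set `|f x| | x in [set x : X | `|x| <= 1]].

Definition reflexive_space : Prop :=
  forall Phi : (X -> R) -> R,
    (forall (a : R) (f g : X -> R), is_dual f -> is_dual g ->
        Phi (fun z => a * f z + g z) = a * Phi f + Phi g) ->
    (exists C : R, forall f, is_dual f -> `|Phi f| <= C * dnorm f) ->
    exists x : X, forall f, is_dual f -> Phi f = f x.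

(* set-valued operators T : X ⇉ X^*, given by their graph *)
Definition monotone_op (T : X -> (X -> R) -> Prop) : Prop :=
  forall x xs y ys, T x xs -> T y ys -> 0 <= xs (x - y) - ys (x - y).

Definition maximally_monotone (T : X -> (X -> R) -> Prop) : Prop :=
  [/\ forall x xs, T x xs -> is_dual xs,
      monotone_op T &
      forall y ys, is_dual ys ->
        (forall x xs, T x xs -> 0 <= ys (y - x) - xs (y - x)) -> T y ys].

Definition lsc_XXs (h : X -> (X -> R) -> \bar R) : Prop :=
  forall x xs, is_dual xs -> forall r : R, (r%:E < h x xs)%E ->
    exists2 d : R, 0 < d & forall y ys, is_dual ys -> `|y - x| < d ->
      dnorm (fun z => ys z - xs z) < d -> (r%:E < h y ys)%E.

Definition convex_XXs (h : X -> (X -> R) -> \bar R) : Prop :=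
  forall (x y : X) (xs ys : X -> R) (l : R), is_dual xs -> is_dual ys -> 0 < l < 1 ->
    (h (l *: x + (1 - l) *: y)%R (fun z => l * xs z + (1 - l) * ys z)%R
      <= l%:E * h x xs + (1 - l)%:E * h y ys)%E.

Definition in_HT (T : X -> (X -> R) -> Prop) (h : X -> (X -> R) -> \bar R)
  : Prop :=
  [/\ lsc_XXs h, convex_XXs h,
      (forall x xs, is_dual xs -> ((xs x)%:E <= h x xs)%E) &
      (forall x xs, T x xs -> h x xs = (xs x)%:E)].

Definition in_H (h : X -> (X -> R) -> \bar R) : Prop :=
  exists T, maximally_monotone T /\ in_HT T h.

(* conjI h (x,xs) = sup over (w,ws) of  ws x + xs w - h w ws ,  i.e. (h^* o i)(x,xs) *)
Definition conjI (h : X -> (X -> R) -> \bar R) (x : X) (xs : X -> R)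
  : \bar R :=
  ereal_sup [set e | exists w ws, is_dual ws /\
                       e = ((xs w + ws x)%:E - h w ws)%E].

Definition Aop (h : X -> (X -> R) -> \bar R) : X -> (X -> R) -> \bar R :=
  fun x xs => ((h x xs + conjI h x xs) * (2^-1)%:E)%E.

Definition Aiter (n : nat) (h : X -> (X -> R) -> \bar R) :=
  iter n Aop h.

(* A^oo h = pointwise infimum of A^n h, n >= 1 *)
Definition Ainf (h : X -> (X -> R) -> \bar R) (x : X) (xs : X -> R)
  : \bar R :=
  ereal_inf (range (fun n : nat => Aiter n.+1 h x xs)).

End Defs.

(* log_2 on extended reals, with log_2 0 = -oo (nonpositive finite
   arguments are sent to -oo) *)
Definition log2e {R : realType} (e : \bar R) : \bar R :=
  match e with
  | EFin r => if r <= 0 then -oo%E else (ln r / ln 2)%:E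
  | +oo%E => +oo%E
  | -oo%E => -oo%E
  end.

(* Main.v *)
Require Import Defs.
From HB Require Import structures.
From mathcomp Require Import all_boot all_order all_algebra.
From mathcomp Require Import all_classical all_reals all_analysis.
From mathcomp Require Import ring lra.
Import Order.TTheory GRing.Theory Num.Theory.
Import numFieldNormedType.Exports.
Local Open Scope classical_set_scope.
Local Open Scope ring_scope.
Section Aux.
Context {R : realType}.
Local Open Scope ereal_scope.
Notation half := ((2:R)^-1)%:E.

Lemma half_gt0 : (0 < (2:R)^-1)%R. Proof. by rewrite invr_gt0. Qed.

Lemma E1 (c : R) (u v : \bar R) : c%:E - v <= u -> c%:E - u <= v.
Proof.
case: u => [u||]; case: v => [v||] //=; rewrite ?leey ?leNye //.
all: try (rewrite !lee_fin; lra).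
Qed.

Lemma E4 (c : R) (a b : \bar R) : a <= b -> c%:E - b <= c%:E - a.
Proof.
case: a => [a||]; case: b => [b||] //=; rewrite ?leey ?leNye //.
all: try (rewrite !lee_fin; lra).
Qed.

Lemma E2 (c : R) (a b : \bar R) : -oo < a -> -oo < b ->
  c%:E - (a + b) * half <= ((c%:E - a) + (c%:E - b)) * half.
Proof.
have h2 := half_gt0.
case: a => [a||]; case: b => [b||] //= _ _; rewrite ?leey ?leNye //.
- do 4 rewrite -?EFinD -?EFinB -?EFinM; rewrite lee_fin; lra.
all: rewrite /= ?mulyr ?mulNyr ?gtr0_sg // ?mul1e ?leNye ?leey //.
Qed.

Lemma E3 (a b a' b' : \bar R) : a <= a' -> b <= b' -> (a + b) * half <= (a' + b') * half.
Proof. move=> ha hb; rewrite lee_wpmul2r // ?lee_fin ?invr_ge0 //; exact: leeD. Qed.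

Lemma E5 (g c : \bar R) : c <= g -> (g + c) * half <= g.
Proof.
have h2 := half_gt0.
case: g => [g||]; case: c => [c||] //=; rewrite ?leey ?leNye //.
- move=> H; rewrite -EFinD -EFinM !lee_fin in H *; lra.
all: move=> _; rewrite /= ?mulyr ?mulNyr ?gtr0_sg // ?mul1e ?leNye ?leey //.
Qed.

Lemma E6 (c : R) (a : \bar R) : a < +oo -> -oo < c%:E - a.
Proof. by case: a => [a||] //= _; rewrite ?ltNyr. Qed.

Lemma E7 (a b : \bar R) : -oo < a -> -oo < b -> -oo < (a + b) * half.
Proof.
have h2 := half_gt0.
case: a => [a||]; case: b => [b||] //= _ _;
rewrite /= ?mulyr ?mulNyr ?gtr0_sg // ?mul1e ?ltNyr ?ltNye //.
Qed.

Lemma E8 (a b : \bar R) : a < +oo -> b < +oo -> (a + b) * half < +oo.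
Proof.
have h2 := half_gt0.
case: a => [a||]; case: b => [b||] //= _ _;
rewrite /= ?mulyr ?mulNyr ?gtr0_sg // ?mul1e ?ltey ?ltNye //.
Qed.

Lemma E9 (c : \bar R) : -oo < c -> (+oo + c) * half = +oo.
Proof.
have h2 := half_gt0.
case: c => [c||] //= _; rewrite /= ?mulyr ?gtr0_sg // ?mul1e //.
Qed.

Lemma finE (u : \bar R) : -oo < u -> u < +oo -> u = (fine u)%:E.
Proof. by case: u. Qed.

End Aux.
Section Conj.
Context {R : realType} {X : normedModType R}.
Notation half := ((2:R)^-1)%:E.
Implicit Types (g : X -> (X -> R) -> \bar R) (x w z : X) (xs ws zs : X -> R).

Lemma dual0 (f : X -> R) : is_dual f -> f 0 = 0.
Proof. case=> lin _; have := lin 1 0 0; rewrite scale1r addr0 mul1r; lra. Qed.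

Lemma dual_lin (f : X -> R) a b u v : is_dual f -> f (a *: u + b *: v) = (a * f u + b * f v)%R.
Proof.
move=> d; have f0 := dual0 f d; case: d => lin _.
by rewrite lin -[b *: v]addr0 lin f0 addr0.
Qed.

Lemma dual_comb (f g : X -> R) a b : is_dual f -> is_dual g ->
  is_dual (fun z => a * f z + b * g z)%R.
Proof.
move=> [lf cf] [lg cg]; split.
  move=> c u v; rewrite lf lg; ring.
move=> t; apply: cvgD; (apply: cvgM; [exact: cvg_cst|]).
  exact: cf.
exact: cg.
Qed.

Local Open Scope ereal_scope.
Lemma conj_ge g x xs w ws : is_dual ws ->
  (xs w + ws x)%:E - g w ws <= conjI g x xs.
Proof. by move=> d; apply: ereal_sup_ubound; exists w, ws. Qed.

Lemma conj_le g x xs e :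
  (forall w ws, is_dual ws -> (xs w + ws x)%:E - g w ws <= e) -> conjI g x xs <= e.
Proof. by move=> H; apply: ge_ereal_sup => _ [w [ws [d ->]]]; exact: H. Qed.

Lemma conj_anti g1 g2 x xs : (forall w ws, is_dual ws -> g1 w ws <= g2 w ws) ->
  conjI g2 x xs <= conjI g1 x xs.
Proof.
move=> H; apply: conj_le => w ws d.
apply: le_trans _ (conj_ge _ _ _ _ _ d); apply: E4; exact: H.
Qed.

Lemma conj_conj g x xs : is_dual xs -> conjI (conjI g) x xs <= g x xs.
Proof.
move=> d; apply: conj_le => w ws dw; apply: E1.
by rewrite (addrC (xs w)); apply: conj_ge.
Qed.

Lemma conj_avg g x xs :
  (forall w ws, is_dual ws -> -oo < g w ws) ->
  (forall w ws, is_dual ws -> -oo < conjI g w ws) ->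
  conjI (Aop g) x xs <= (conjI g x xs + conjI (conjI g) x xs) * half.
Proof.
move=> H1 H2; apply: conj_le => w ws d.
apply: le_trans (E2 _ _ _ (H1 _ _ d) (H2 _ _ d)) _.
by apply: E3; apply: conj_ge.
Qed.

Lemma A_conj_le g x xs : is_dual xs ->
  (forall w ws, is_dual ws -> -oo < g w ws) ->
  (forall w ws, is_dual ws -> -oo < conjI g w ws) ->
  conjI (Aop g) x xs <= Aop g x xs.
Proof.
move=> d H1 H2; apply: le_trans (conj_avg _ _ _ H1 H2) _.
rewrite /Aop addeC; apply: E3 => //; exact: conj_conj.
Qed.

Definition J g := (forall w ws, is_dual ws -> -oo < g w ws) /\
  exists z zs, [/\ is_dual zs, g z zs < +oo & conjI g z zs < +oo].

Lemma J_conj g : J g -> forall w ws, -oo < conjI g w ws.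
Proof.
move=> [H1 [z [zs [d H2 H3]]]] w ws.
apply: lt_le_trans _ (conj_ge _ _ _ z _ d); exact: E6 H2.
Qed.

Lemma J_A g : J g -> J (Aop g).
Proof.
move=> Jg; have C := J_conj _ Jg; case: Jg => [H1 [z [zs [d H2 H3]]]]; split.
  by move=> w ws dw; apply: E7 => //; apply: H1.
exists z, zs; have H4 : Aop g z zs < +oo by exact: E8.
split => //; apply: le_lt_trans H4; apply: A_conj_le => //.
Qed.

End Conj.
Lemma R1 {R : realType} (p s1 s2 r a : R) :
  (forall l, 0 < l < 1 -> l * (l * p + (1-l)* s1) + (1-l) * (l* s2+(1-l)* r) <= l * p + (1-l)* a) ->
  s1 + s2 - a <= p.
Proof.
move=> H; rewrite leNgt; apply/negP => Hlt.
set d := s1 + s2 - a - p.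
have dpos : 0 < d by rewrite /d; lra.
have key : forall l, 0 < l < 1 -> l * d <= (1 - l) * (a - r).
  move=> l Hl; have := H l Hl.
  have -> : l * (l * p + (1-l)* s1) + (1-l) * (l* s2+(1-l)* r) =
    (1 - l) * (l * d - (1 - l) * (a - r)) + (l * p + (1-l)* a) by rewrite /d; ring.
  move=> H2; have H3 : (1 - l) * (l * d - (1 - l) * (a - r)) <= 0 by lra.
  have H4 : 0 < 1 - l by case/andP: Hl => _ ?; lra.
  have : l * d - (1 - l) * (a - r) <= 0.
    by rewrite -(pmulr_rle0 _ H4).
  lra.
case: (lerP (a - r) 0) => He.
  have h2 : 0 < (2:R)^-1 < 1.
    by apply/andP; split; [rewrite invr_gt0 | rewrite invf_lt1]; lra.
  have := key _ h2; case/andP: h2 => ? ?; nra.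
set e := a - r in He key.
set t := d / (2 * (e + d)).
have tpos : 0 < t by rewrite /t divr_gt0 // mulr_gt0 //; lra.
have tlt : t < 1.
  by rewrite /t ltr_pdivrMr ?mulr_gt0 //; lra.
have ht : 0 < 1 - t < 1 by apply/andP; split; lra.
have := key _ ht.
have -> : 1 - (1 - t) = t by ring.
have tE : t * (e + d) = d / 2 by rewrite /t; field; lra.
nra.
Qed.
Section Fitz.
Context {R : realType} {X : normedModType R}.
Implicit Types (h : X -> (X -> R) -> \bar R) (x w z : X) (xs ws zs : X -> R).

Lemma fitz h z zs w ws : convex_XXs h ->
  (forall x xs, is_dual xs -> ((xs x)%:E <= h x xs)%E) ->
  is_dual zs -> is_dual ws -> h z zs = (zs z)%:E ->
  ((zs w + ws z)%:E - h w ws <= (zs z)%:E)%E.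
Proof.
move=> cvx ge dz dw hz.
case Hw: (h w ws) => [a||].
- rewrite -EFinB lee_fin; apply: (R1 _ _ _ (ws w)) => l Hl.
  have := cvx z w zs ws l dz dw Hl.
  rewrite hz Hw -!EFinM -EFinD.
  have := ge (l *: z + (1-l) *: w) _ (dual_comb zs ws l (1-l) dz dw).
  move=> H1 H2; have := le_trans H1 H2; rewrite lee_fin /= (dual_lin zs) // (dual_lin ws) //.
- by change (-oo <= (zs z)%:E)%E; exact: leNye.
- by have := ge w ws dw; rewrite Hw leeNy_eq.
Qed.

Lemma J_h h : in_H h -> J h.
Proof.
move=> [T [[dT monoT maxT] [_ cvx ge eqT]]].
have [z [zs Tz]] : exists z zs, T z zs.
  case: (pselect (exists z zs, T z zs)) => // nT.
  exfalso; apply: (nT); exists 0%R, (fun=> 0%R); apply: maxT.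
    split; first by move=> *; rewrite mulr0 addr0.
    by move=> t; exact: cvg_cst.
  by move=> x xs Txs; exfalso; apply: nT; exists x, xs.
have dz := dT _ _ Tz.
split.
  by move=> w ws dw; apply: lt_le_trans (ge _ _ dw); rewrite ltNyr.
exists z, zs; split => //; first by rewrite eqT // ltry.
apply: (@le_lt_trans _ _ (zs z)%:E); last by rewrite ltry.
apply: conj_le => w ws dw; apply: fitz => //; exact: eqT.
Qed.

End Fitz.
Section Iter.
Context {R : realType} {X : normedModType R}.
Variable h : X -> (X -> R) -> \bar R.
Hypothesis Hh : in_H h.
Local Open Scope ereal_scope.

Lemma JG k : J (Aiter k h).
Proof. elim: k => [|k IH]; first exact: J_h. by rewrite /Aiter iterS; apply: J_A. Qed.

Lemma C1 k x xs : is_dual xs -> conjI (Aiter k.+1 h) x xs <= Aiter k.+1 h x xs.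
Proof.
move=> d; rewrite /Aiter iterS; apply: A_conj_le => //.
  by case: (JG k).
by move=> w ws _; exact: J_conj _ (JG k) w ws.
Qed.

Lemma D1 k w ws : is_dual ws -> Aiter k.+2 h w ws <= Aiter k.+1 h w ws.
Proof.
move=> d; rewrite [X in X <= _]/Aiter iterS -/(Aiter k.+1 h) /Aop; apply: E5.
exact: C1.
Qed.

Lemma D2 n m w ws : (n <= m)%N -> is_dual ws -> Aiter m.+1 h w ws <= Aiter n.+1 h w ws.
Proof.
move=> /subnK <- d; elim: (m - n)%N => [|k IH]; first by rewrite add0n.
rewrite addSn; exact: le_trans (D1 _ _ _ d) IH.
Qed.

Lemma lower n m x xs : is_dual xs ->
  conjI (Aiter n.+1 h) x xs <= Aiter m.+1 h x xs.
Proof.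
move=> d; case: (leqP n m) => H.
  apply: le_trans (C1 m _ _ d); apply: conj_anti => w ws dw; exact: D2.
apply: le_trans (C1 n _ _ d) _; apply: D2 => //; exact: ltnW.
Qed.

Lemma Ainf_lower n x xs : is_dual xs -> conjI (Aiter n.+1 h) x xs <= Ainf h x xs.
Proof. by move=> d; apply: le_ereal_inf_tmp => _ [m _ <-]; exact: lower. Qed.

End Iter.
Theorem theorem2p4 (R : realType) (X : completeNormedModType R)
  (h : X -> (X -> R) -> \bar R) (x : X) (xs : X -> R) :
  reflexive_space (X := X) -> in_H h -> is_dual xs ->
  ((Order.max (Aop h x xs) (conjI (Aop h) x xs) = +oo%E ->
      Ainf h x xs = +oo%E) /\
   (forall (eps : R) (n : nat),
      (Order.max (Aop h x xs) (conjI (Aop h) x xs) < +oo)%E ->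
      0 < eps -> (1 <= n)%N ->
      ((n%:R)%:E > 1%E + log2e (Aop h x xs - conjI (Aop h) x xs)
                     - log2e eps%:E)%E ->
      (Aiter n h x xs - eps%:E <= Ainf h x xs)%E)).
Proof.
move=> _ Hh dx; have JGk := JG _ Hh.
have A1 : Aop h = Aiter 1 h by [].
split.
- move=> Hmax.
  have [Ha|Hb] : Aop h x xs = +oo%E \/ conjI (Aop h) x xs = +oo%E.
    by move: Hmax; rewrite /Order.max; case: ifP => _ ->; [right|left].
  + have Hall : forall m, Aiter m.+1 h x xs = +oo%E.
      elim => [//|m IH].
      rewrite /Aiter iterS -/(Aiter m.+1 h) /Aop IH; apply: E9.
      exact: J_conj _ (JGk m.+1) x xs.
    apply/eqP; rewrite eq_le leey /=; apply: le_ereal_inf_tmp => _ [m _ <-].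
    by rewrite Hall.
  + apply/eqP; rewrite eq_le leey /= -Hb A1; exact: (Ainf_lower h Hh 0 x xs dx).
- move=> eps n Hmax e0 n1 Hlog.
  rewrite gt_max in Hmax; case/andP: Hmax; rewrite A1 => Ha Hb.
  have cb : (-oo < conjI (Aiter 1 h) x xs)%E := J_conj _ (JGk 1) x xs.
  have fin k : [/\ (-oo < conjI (Aiter k.+1 h) x xs)%E,
                  (conjI (Aiter k.+1 h) x xs < +oo)%E,
                  (-oo < Aiter k.+1 h x xs)%E & (Aiter k.+1 h x xs < +oo)%E].
    have l1 : (conjI (Aiter 1 h) x xs <= conjI (Aiter k.+1 h) x xs)%E.
      by apply: conj_anti => w ws dw; apply: D2.
    have l2 : (Aiter k.+1 h x xs <= Aiter 1 h x xs)%E by apply: D2.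
    have l3 := C1 h Hh k x xs dx.
    split.
    + exact: lt_le_trans cb l1.
    + exact: le_lt_trans l3 (le_lt_trans l2 Ha).
    + exact: lt_le_trans (lt_le_trans cb l1) l3.
    + exact: le_lt_trans l2 Ha.
  pose a k := fine (Aiter k.+1 h x xs).
  pose b k := fine (conjI (Aiter k.+1 h) x xs).
  have aE k : Aiter k.+1 h x xs = (a k)%:E.
    by case: (fin k) => _ _ ? ?; apply: finE.
  have bE k : conjI (Aiter k.+1 h) x xs = (b k)%:E.
    by case: (fin k) => ? ? _ _; apply: finE.
  have rec k : a k.+1 = ((a k + b k) * 2^-1)%R.
    have : Aiter k.+2 h x xs = ((a k + b k) * 2^-1)%:E.
      by rewrite /Aiter iterS -/(Aiter k.+1 h) /Aop aE bE -EFinD -EFinM.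
    by rewrite aE => -[].
  have bmono k : (b k <= b k.+1)%R.
    have : (conjI (Aiter k.+1 h) x xs <= conjI (Aiter k.+2 h) x xs)%E.
      by apply: conj_anti => w ws dw; apply: D2.
    by rewrite !bE lee_fin.
  have ba k : (b k <= a k)%R.
    by have := C1 h Hh k x xs dx; rewrite aE bE lee_fin.
  have halv k : ((a k - b k) * 2^+k <= a 0%N - b 0%N)%R.
    elim: k => [|k IH]; first by rewrite expr0 mulr1.
    have H : (a k.+1 - b k.+1 <= (a k - b k) * 2^-1)%R.
      by rewrite rec; have := bmono k; lra.
    have p : (0 < (2:R)^+k)%R by rewrite exprn_gt0.
    apply: le_trans IH; rewrite exprS.
    have -> : ((a k - b k) * 2 ^+ k = ((a k - b k) * 2^-1) * (2 * 2^+k))%R.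
      by field.
    by rewrite ler_wpM2r // mulr_ge0 // ltW.
  case: n n1 Hlog => [//|k] _ Hlog.
  apply: le_trans _ (Ainf_lower h Hh k x xs dx).
  rewrite aE bE -EFinB lee_fin.
  have p : (0 < (2:R)^+k)%R by rewrite exprn_gt0.
  suff H : (a 0%N - b 0%N <= eps * 2^+k)%R.
    have hk := halv k.
    have : ((a k - b k) * 2^+k <= eps * 2^+k)%R by apply: le_trans H.
    rewrite ler_pM2r // => ?; lra.
  move: Hlog; rewrite A1 (aE 0%N) (bE 0%N) -EFinB /log2e.
  case: ifP => HD.
    by move=> _; have := mulr_gt0 e0 p; lra.
  have Dp : (0 < a 0%N - b 0%N)%R by rewrite ltNge HD.
  have -> : (eps <= 0)%R = false by apply/negbTE; rewrite -ltNge.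
  set D := (a 0%N - b 0%N)%R => Hl0.
  have Hl : ((1 + ln D / ln 2 - ln eps / ln 2) < k.+1%:R)%R.
    have Hl1 : ((1 + ln D / ln 2 - ln eps / ln 2)%:E < (k.+1%:R)%:E)%E by exact: Hl0.
    by rewrite lte_fin in Hl1.
  rewrite -addn1 natrD in Hl.
  have l2 : (0 < ln (2:R))%R by apply: ln_gt0; lra.
  have Hl2 : ((ln D - ln eps) / ln 2 < k%:R)%R by rewrite mulrBl; lra.
  rewrite ltr_pdivrMr // in Hl2.
  have : (ln D < ln (2^+k * eps))%R.
    rewrite lnM ?posrE ?exprn_gt0 // lnXn // -[X in _ < X + _]mulr_natr mulrC; lra.
  by rewrite ltr_ln ?posrE ?mulr_gt0 // ?exprn_gt0 // => /ltW; rewrite mulrC.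
Qed.
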